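(* Let $f$ be a Moufang permutation on an abelian group $(X,+)$ with associated biadditive mapping $\beta$, and let $i\in\mathbb Z$. Define $\beta_i(x,y)=\sum_{k\in I(0,i)}f^{-3k}(\beta(x,y))$. Then $f^i$ is a Moufang permutation on $(X,+)$ with associated biadditive mapping $\beta_i$, and $$\mathrm{Img}(\beta_i)\subseteq\mathrm{Img}(\beta)\subseteq\mathrm{Rad}(\beta)\subseteq\mathrm{Rad}(\beta_i).$$
   Context: A permutation $f$ of an abelian group $(X,+)$ is a Moufang permutation if the map $\beta(x,y)=f^{-1}(f(x)+f(y))-x-y$ (P1) is symmetric, alternating ($\beta(x,x)=0$) and biadditive, and for all $x,y,z\in X$: (P2) $\beta(\beta(x,y),z)=0$ and (P3) $\beta(f(x),f(y))=f(\beta(f^3(x),y))$; $\beta$ is the associated biadditive mapping. $\mathrm{Img}$ denotes image; $\mathrm{Rad}(\beta)=\{x\in X:\beta(x,y)=0\ \forall y\in X\}$. $I(i,j)$ is $\emptyset$ if $i=j$, $\{i,\dots,j-1\}$ if $i<j$, $\{j,\dots,i-1\}$ if $j<i$. *)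

(* Defs.v *)
From mathcomp Require Import all_boot all_order all_algebra.
Set Implicit Arguments. Unset Strict Implicit. Unset Printing Implicit Defensive.
Import GRing.Theory Num.Theory.
Local Open Scope ring_scope.

Section Moufang.
Variable X : zmodType.

Definition assoc_beta (f finv : X -> X) (x y : X) : X :=
  finv (f x + f y) - x - y.

Definition moufang_perm (f finv : X -> X) : Prop :=
  let b := assoc_beta f finv in
  [/\ cancel f finv, cancel finv f,
      [/\ (forall x y, b x y = b y x),
          (forall x, b x x = 0),
          (forall x y z, b (x + y) z = b x z + b y z) &
          (forall x y z, b x (y + z) = b x y + b x z)],
      (* (P2) *)
      (forall x y z, b (b x y) z = 0) &
      (* (P3) *)
      (forall x y, b (f x) (f y) = f (b (f (f (f x))) y))].

Definition fpow (f finv : X -> X) (i : int) : X -> X :=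
  match i with
  | Posz n => iter n f
  | Negz n => iter n.+1 finv
  end.

Definition Img (b : X -> X -> X) (z : X) : Prop := exists x y, z = b x y.
Definition Rad (b : X -> X -> X) (x : X) : Prop := forall y, b x y = 0.

End Moufang.

Definition intI (i j : int) : seq int :=
  if (i < j)%R then [seq i + (k%:Z) | k <- iota 0 `|j - i|%N]
  else if (j < i)%R then [seq j + (k%:Z) | k <- iota 0 `|i - j|%N]
  else [::].

Definition beta_i (X : zmodType) (f finv : X -> X) (i : int) (x y : X) : X :=
  \sum_(k <- intI 0 i) fpow f finv (- (k * 3)) (assoc_beta f finv x y).

(* Main.v *)
Require Import Defs.
From mathcomp Require Import all_boot all_order all_algebra zify.
Import GRing.Theory Num.Theory.
Local Open Scope ring_scope.
Set Implicit Arguments.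

Lemma hlp (X : zmodType) (a c w : X) : a + c + (w - a - c) = w.
Proof. by rewrite -[w - a - c]addrA -opprD (addrC (a + c)) subrK. Qed.

Lemma hlp2 (X : zmodType) (a c S T : X) : a + c + S + T - a - c = S + T.
Proof. by rewrite -[a + c + S + T]addrA (addrC (a + c)) -[_ - a - c]addrA -opprD addrK. Qed.
Lemma hlp3 (X : zmodType) (a c T : X) : a + c + - T - a - c = - T.
Proof. by rewrite (addrC (a + c)) -[_ - a - c]addrA -opprD addrK. Qed.
Lemma hlp4 (X : zmodType) (a c : X) : a + c - a - c = 0.
Proof. by rewrite -[_ - a - c]addrA -opprD subrr. Qed.

Section Gen.
Variables (X : zmodType) (f g : X -> X).
Hypothesis M : moufang_perm f g.
Local Notation b := (assoc_beta f g).

Lemma fK : cancel f g. Proof. by case: M. Qed.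
Lemma gK : cancel g f. Proof. by case: M. Qed.
Lemma bC x y : b x y = b y x. Proof. by case: M => _ _ []. Qed.
Lemma bxx x : b x x = 0. Proof. by case: M => _ _ []. Qed.
Lemma bDl x y z : b (x + y) z = b x z + b y z. Proof. by case: M => _ _ []. Qed.
Lemma bDr x y z : b x (y + z) = b x y + b x z. Proof. by case: M => _ _ []. Qed.
Lemma P2 x y z : b (b x y) z = 0. Proof. by case: M. Qed.
Lemma P3 x y : b (f x) (f y) = f (b (f (f (f x))) y). Proof. by case: M. Qed.

Lemma b0l y : b 0 y = 0.
Proof.
have h := bDl 0 0 y; rewrite addr0 in h.
have: b 0 y + b 0 y - b 0 y = b 0 y - b 0 y by rewrite -h.
by rewrite addrK subrr.
Qed.
Lemma bNl x y : b (- x) y = - b x y.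
Proof. by apply/eqP; rewrite -addr_eq0 -bDl addNr b0l. Qed.
Lemma P2r x y z : b z (b x y) = 0. Proof. by rewrite bC P2. Qed.
Lemma b2 x y : - b x y = b x y.
Proof.
have h := bxx (x + y); rewrite bDl !bDr !bxx add0r addr0 (bC y x) in h.
by rewrite -[LHS]add0r -h addrK.
Qed.

Lemma gD u v : g (u + v) = g u + g v + b (g u) (g v).
Proof. by rewrite /assoc_beta !gK hlp. Qed.

Definition isB z := exists x y, z = b x y.

Lemma gB x y : g (b x y) = b (f (f x)) (g y).
Proof. by have := P3 (g x) (g y); rewrite !gK => ->; rewrite fK. Qed.
Lemma fB x y : f (b x y) = b (g (g x)) (f y).
Proof. by have := P3 (g (g (g x))) y; rewrite !gK => ->. Qed.

Lemma isB_f z : isB z -> isB (f z).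
Proof. by case=> x [y ->]; rewrite fB; do 2 eexists. Qed.
Lemma isB_g z : isB z -> isB (g z).
Proof. by case=> x [y ->]; rewrite gB; do 2 eexists. Qed.
Lemma isB_iterf n z : isB z -> isB (iter n f z).
Proof. by move=> h; elim: n => // n IH; rewrite iterS; apply: isB_f. Qed.
Lemma isB_iterg n z : isB z -> isB (iter n g z).
Proof. by move=> h; elim: n => // n IH; rewrite iterS; apply: isB_g. Qed.
Lemma isB_rad z y : isB z -> b z y = 0.
Proof. by case=> x [y' ->]; rewrite P2. Qed.
Lemma isB_radr z y : isB z -> b y z = 0.
Proof. by move=> h; rewrite bC isB_rad. Qed.

Lemma gDB u c : isB c -> g (u + c) = g u + g c.
Proof. by move=> h; rewrite gD isB_radr ?addr0 //; apply: isB_g. Qed.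
Lemma fDB u c : isB c -> f (u + c) = f u + f c.
Proof.
move=> h; apply: (can_inj gK); rewrite gDB ?fK //; exact: isB_f.
Qed.
Lemma g0 : g 0 = 0.
Proof.
have h := gD 0 0; rewrite addr0 bxx addr0 in h.
have: g 0 + g 0 - g 0 = g 0 - g 0 by rewrite -h.
by rewrite addrK subrr.
Qed.
Lemma f0 : f 0 = 0. Proof. by rewrite -{1}g0 gK. Qed.
Lemma iterf0 n : iter n f 0 = 0. Proof. by elim: n => // n IH; rewrite iterS IH f0. Qed.
Lemma iterg0 n : iter n g 0 = 0. Proof. by elim: n => // n IH; rewrite iterS IH g0. Qed.
Lemma iterfDB n u c : isB c -> iter n f (u + c) = iter n f u + iter n f c.
Proof. by move=> h; elim: n => // n IH; rewrite !iterS IH fDB //; apply: isB_iterf. Qed.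
Lemma itergDB n u c : isB c -> iter n g (u + c) = iter n g u + iter n g c.
Proof. by move=> h; elim: n => // n IH; rewrite !iterS IH gDB //; apply: isB_iterg. Qed.
Lemma isB_N z : isB z -> isB (- z).
Proof. by case=> x [y ->]; exists (- x), y; rewrite bNl. Qed.
Lemma fNB c : isB c -> f (- c) = - f c.
Proof.
move=> h; have e : f c + f (- c) = 0 by rewrite -fDB ?subrr ?f0 //; exact: isB_N.
by rewrite -[RHS]add0r -e addrC addKr.
Qed.

Lemma SA a c : b (f (f (f a))) c = b a (f (f (f c))).
Proof.
by rewrite (bC a); apply: (can_inj fK); rewrite -!P3 bC.
Qed.

Lemma SAg a c : b (g (g (g a))) c = b a (g (g (g c))).
Proof. by have := SA (g (g (g a))) (g (g (g c))); rewrite !gK => ->. Qed.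

Lemma itergB n x y : iter n g (b x y) = b (iter (n.*2) f x) (iter n g y).
Proof. by elim: n => // n IH; rewrite iterS IH gB doubleS !iterS. Qed.
Lemma iterfB n x y : iter n f (b x y) = b (iter (n.*2) g x) (iter n f y).
Proof. by elim: n => // n IH; rewrite iterS IH fB doubleS !iterS. Qed.

Lemma g3B x y : g (g (g (b x y))) = b (f (f (f x))) y.
Proof. by have := itergB 3 x y; rewrite /= => ->; rewrite SA !gK. Qed.
Lemma f3B x y : f (f (f (b x y))) = b (g (g (g x))) y.
Proof. by have := iterfB 3 x y; rewrite /= => ->; rewrite SAg !fK. Qed.

Lemma itergB3 m x y : iter (m * 3) g (b x y) = b (iter (m * 3) f x) y.
Proof.
elim: m => // m IH; rewrite mulSn !iterD IH /=.
by rewrite g3B.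
Qed.
Lemma iterfB3 m x y : iter (m * 3) f (b x y) = b (iter (m * 3) g x) y.
Proof.
elim: m => // m IH; rewrite mulSn !iterD IH /=.
by rewrite f3B.
Qed.

Lemma fgC k z : f (iter k g z) = iter k g (f z).
Proof. by case: k => // k; rewrite iterS iterSr gK fK. Qed.
Lemma iterfgC n k z : iter n f (iter k g z) = iter k g (iter n f z).
Proof. by elim: n => // n IH; rewrite !iterS IH fgC. Qed.
Lemma iterfK n : cancel (iter n f) (iter n g).
Proof. by elim: n => // n IH x; rewrite iterSr iterS fK IH. Qed.
Lemma itergK n : cancel (iter n g) (iter n f).
Proof. by elim: n => // n IH x; rewrite iterSr iterS gK IH. Qed.

Lemma rad_sum n (F : 'I_n -> X) z : (forall i, isB (F i)) -> b (\sum_(i < n) F i) z = 0.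
Proof.
move=> h; apply: (big_ind (fun s => b s z = 0)); first exact: b0l.
  by move=> u v hu hv; rewrite bDl hu hv addr0.
by move=> i _; apply: isB_rad.
Qed.

Lemma iterf_sum k n (F : 'I_n -> X) : (forall i, isB (F i)) ->
  iter k f (\sum_(i < n) F i) = \sum_(i < n) iter k f (F i).
Proof.
move=> h; apply: (big_rec2 (fun s t => iter k f s = t)); first exact: iterf0.
by move=> i y1 y2 _ <-; rewrite addrC iterfDB // addrC.
Qed.

Lemma gff u v : g (f u + f v) = u + v + b u v.
Proof. by rewrite /assoc_beta hlp. Qed.

Definition Bn n x y := \sum_(m < n) iter (m * 3) g (b x y).

Lemma BnE n x y : assoc_beta (iter n f) (iter n g) x y = Bn n x y.
Proof.
rewrite /Bn; elim: n => [|n IH]; first by rewrite big_ord0 /assoc_beta /= hlp4.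
move: IH; rewrite {1}/assoc_beta => IH; rewrite {1}/assoc_beta big_ord_recr.
rewrite [iter n.+1 g _]iterSr !iterS gff itergDB; last by do 2 eexists.
have -> : iter n g (iter n f x + iter n f y) = x + y + \sum_(i < n) iter (i * 3) g (b x y).
  by rewrite -IH hlp.
rewrite itergB -iterD iterfK.
have -> : (n.*2 + n = n * 3)%N by rewrite -addnn; lia.
by rewrite -itergB3 hlp2.
Qed.

Lemma iter2K n x : iter (n.*2) g (iter n f (iter n f (iter n f x))) = iter n f x.
Proof. by rewrite -addnn iterD !iterfK. Qed.

Lemma Bn_moufang n : moufang_perm (iter n f) (iter n g).
Proof.
split; [exact: iterfK | exact: itergK | split | |].
- by move=> x y; rewrite !BnE; apply: eq_bigr => i _; rewrite bC.
- by move=> x; rewrite BnE; apply: big1 => i _; rewrite bxx iterg0.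
- move=> x y z; rewrite !BnE -big_split; apply: eq_bigr => i _.
  by rewrite bDl itergDB //; exists y, z.
- move=> x y z; rewrite !BnE -big_split; apply: eq_bigr => i _.
  by rewrite bDr itergDB //; exists x, z.
- move=> x y z; rewrite !BnE; apply: big1 => i _.
  rewrite rad_sum ?iterg0 // => j; apply: isB_iterg; by do 2 eexists.
- move=> x y; rewrite !BnE /Bn iterf_sum; last first.
    by move=> i; apply: isB_iterg; do 2 eexists.
  apply: eq_bigr => i _; rewrite iterfgC; congr (iter _ g _).
  by rewrite iterfB iter2K.
Qed.

Lemma Bn_img n x y : Bn n x y = b (\sum_(m < n) iter (m * 3) f x) y.
Proof.
rewrite /Bn (big_morph (fun s => b s y) (fun u v => bDl u v y) (b0l y)).
by apply: eq_bigr => i _; rewrite itergB3.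
Qed.

Lemma Bn_rad n z y : (forall w, b z w = 0) -> Bn n z y = 0.
Proof. by move=> h; apply: big1 => i _; rewrite h iterg0. Qed.

Lemma fbgg x y : b (g x) (g y) = f (f (b x y)).
Proof. by rewrite fB fB SAg !fK. Qed.

Lemma bgf x y : assoc_beta g f x y = f (f (f (b x y))).
Proof.
rewrite /assoc_beta.
have -> : g x + g y = g (x + y) + - b (g x) (g y).
  by rewrite gD addrK.
rewrite fDB; last by apply: isB_N; do 2 eexists.
rewrite gK fNB; last by do 2 eexists.
by rewrite hlp3 fbgg f3B b2.
Qed.

Lemma f3DB u c : isB c -> f (f (f (u + c))) = f (f (f u)) + f (f (f c)).
Proof.
move=> h; have h1 := isB_f h; have h2 := isB_f h1.
by rewrite (fDB _ h) (fDB _ h1) (fDB _ h2).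
Qed.

Lemma Mg : moufang_perm g f.
Proof.
split; [exact: gK | exact: fK | split | |].
- by move=> x y; rewrite !bgf bC.
- by move=> x; rewrite bgf bxx !f0.
- by move=> x y z; rewrite !bgf bDl f3DB //; do 2 eexists.
- by move=> x y z; rewrite !bgf bDr f3DB //; do 2 eexists.
- move=> x y z; rewrite !bgf isB_rad ?f0 //.
  by do 3 apply: isB_f; do 2 eexists.
- move=> x y; rewrite !bgf fbgg fK -f3B.
  done.
Qed.

End Gen.

Lemma intI_pos n : intI 0 n%:Z = [seq k%:Z | k <- iota 0 n].
Proof.
case: n => [|n] //; rewrite /intI /= add0r addn0; congr (_ :: _).
Qed.
Lemma intI_neg n : intI 0 (Negz n) = [seq Negz n + k%:Z | k <- iota 0 n.+1].
Proof. by []. Qed.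

Lemma fpowN (X : zmodType) (f g : X -> X) n : fpow f g (- n%:Z) = iter n g.
Proof. by case: n. Qed.

Lemma beta_pos (X : zmodType) (f g : X -> X) n x y :
  beta_i f g n%:Z x y = Bn _ f g n x y.
Proof.
rewrite /beta_i intI_pos big_map /Bn -(big_mkord xpredT (fun m => iter (m * 3) g _)).
rewrite /index_iota subn0.
by apply: eq_bigr => i _; rewrite -PoszM fpowN.
Qed.

Lemma beta_neg (X : zmodType) (f g : X -> X) n x y :
  beta_i f g (Negz n) x y = \sum_(m < n.+1) iter (m * 3) f (f (f (f (assoc_beta f g x y)))).
Proof.
rewrite /beta_i intI_neg big_map -(big_mkord xpredT (fun m => iter (m * 3) f _)) big_nat_rev.
rewrite -[iota 0 n.+1]/(index_iota 0 n.+1).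
apply: eq_big_nat => i /andP [_ hi].
have -> : - ((Negz n + i%:Z) * 3) = Posz ((0 + n.+1 - i.+1) * 3 + 3).
  rewrite NegzE; lia.
by rewrite /= iterD.
Qed.

Theorem mainTheorem13 (X : zmodType) (f finv : X -> X) (i : int) :
  moufang_perm f finv ->
  [/\ moufang_perm (fpow f finv i) (fpow f finv (- i)),
      (forall x y, assoc_beta (fpow f finv i) (fpow f finv (- i)) x y
                   = beta_i f finv i x y),
      (forall z, Img (beta_i f finv i) z -> Img (assoc_beta f finv) z),
      (forall z, Img (assoc_beta f finv) z -> Rad (assoc_beta f finv) z) &
      (forall z, Rad (assoc_beta f finv) z -> Rad (beta_i f finv i) z)].
Proof.
move=> M; case: i => n.
- rewrite fpowN; have -> : fpow f finv (Posz n) = iter n f by [].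
  split.
  + exact: Bn_moufang M n.
  + by move=> x y; rewrite (BnE M) beta_pos.
  + by move=> z [x [y ->]]; rewrite beta_pos (Bn_img M); do 2 eexists.
  + by move=> z [x [y ->]] w; rewrite (P2 M).
  + by move=> z hz w; rewrite beta_pos (Bn_rad M).
- have -> : fpow f finv (Negz n) = iter n.+1 finv by [].
  have -> : fpow f finv (- Negz n) = iter n.+1 f by [].
  have Mg' := Mg M.
  have E : forall x y, beta_i f finv (Negz n) x y = Bn _ finv f n.+1 x y.
    by move=> x y; rewrite beta_neg /Bn; apply: eq_bigr => j _; rewrite (bgf M).
  split.
  + exact: Bn_moufang Mg' n.+1.
  + by move=> x y; rewrite (BnE Mg') E.
  + move=> z [x [y ->]]; rewrite E (Bn_img Mg') (bgf M) (f3B M); by do 2 eexists.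
  + by move=> z [x [y ->]] w; rewrite (P2 M).
  + move=> z hz w; rewrite E (Bn_rad Mg') // => v.
    by rewrite (bgf M) hz !(f0 M).
Qed.
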